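(* Let $\Pi$ be the set of graphs $G$ satisfying $\sum_{H:|V(H)|=4} w_H\cdot p(H,G)\le \frac{5}{16}$, where $w_{K_4}=1$, $w_{\bar{K_4}}=\frac12$, $w_{D_4}=\frac{5}{12}$, $w_{\bar{D_4}}=\frac{5}{12}$, $w_{P_3}=\frac13$, $w_{\bar{P_3}}=\frac16$, $w_{C_4}=\frac12$, $w_{\bar{C_4}}=\frac13$, $w_{K_{1,3}}=\frac14$, $w_{\bar{K_{1,3}}}=\frac14$, $w_{P_4}=\frac14$. Then for every $n\ge1$, every $n$-vertex graph $G\in\Pi$ is $\delta$-quasirandom with $\delta=O(n^{-1/24})$ (the implied constant being absolute).
   Context: $K_4$ is the complete graph on 4 vertices, $D_4$ is $K_4$ minus an edge, $P_3$ is the 4-vertex graph consisting of a path on 3 vertices plus an isolated vertex, $C_4$ the 4-cycle, $P_4$ the path on 4 vertices, $K_{1,3}$ the star on 4 vertices, and $\bar H$ the complement of $H$. $p(H,G)$ is the fraction of induced subgraphs of $G$ on $|V(H)|$ vertices isomorphic to $H$. An $n$-vertex graph $G$ is $\delta$-quasirandom (with density $1/2$) if for every pair of disjoint sets $U,V\subseteq V(G)$ with $|U|,|V|\ge\delta n$, the number of edges between $U$ and $V$ satisfies $e(U,V)\in[(\frac12-\delta)|U||V|,(\frac12+\delta)|U||V|]$. *)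

(* Defs.v *)
From HB Require Import structures.
From Stdlib Require Import Reals.
From mathcomp Require Import all_boot all_order all_algebra.
From mathcomp Require Import Rstruct.
Set Implicit Arguments. Unset Strict Implicit. Unset Printing Implicit Defensive.
Import Order.TTheory GRing.Theory Num.Theory.
Local Open Scope ring_scope.

Definition simple_graph (T : finType) (e : rel T) : Prop :=
  symmetric e /\ irreflexive e.

Definition rel_of_edges (E : seq (nat * nat)) : rel 'I_4 :=
  fun i j => ((nat_of_ord i, nat_of_ord j) \in E) || ((nat_of_ord j, nat_of_ord i) \in E).

Definition compl_graph (H : rel 'I_4) : rel 'I_4 := fun i j => (i != j) && ~~ H i j.

Definition K4  : rel 'I_4 := rel_of_edges [:: (0,1); (0,2); (0,3); (1,2); (1,3); (2,3)]%N.
Definition D4  : rel 'I_4 := rel_of_edges [:: (0,1); (0,2); (0,3); (1,2); (1,3)]%N.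
(* P3 = path on 3 vertices plus an isolated vertex *)
Definition P3  : rel 'I_4 := rel_of_edges [:: (0,1); (1,2)]%N.
Definition C4  : rel 'I_4 := rel_of_edges [:: (0,1); (1,2); (2,3); (3,0)]%N.
Definition P4  : rel 'I_4 := rel_of_edges [:: (0,1); (1,2); (2,3)]%N.
Definition K13 : rel 'I_4 := rel_of_edges [:: (0,1); (0,2); (0,3)]%N.

Definition induced_copy (T : finType) (e : rel T) (H : rel 'I_4) (S : {set T}) : bool :=
  [exists f : {ffun 'I_4 -> T},
     [&& injectiveb f, f @: setT == S &
         [forall i, forall j, e (f i) (f j) == H i j]]].

Definition p_ind (T : finType) (e : rel T) (H : rel 'I_4) : R :=
  (#|[set S : {set T} | (#|S| == 4)%N && induced_copy e H S]|%:R)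
  / ('C(#|T|, 4)%:R).

Definition weights : seq (rel 'I_4 * R) :=
  [:: (K4, 1); (compl_graph K4, 1/2);
      (D4, 5/12); (compl_graph D4, 5/12);
      (P3, 1/3); (compl_graph P3, 1/6);
      (C4, 1/2); (compl_graph C4, 1/3);
      (K13, 1/4); (compl_graph K13, 1/4);
      (P4, 1/4)].

Definition weighted_density (T : finType) (e : rel T) : R :=
  \sum_(hw <- weights) hw.2 * p_ind e hw.1.

Definition in_Pi (T : finType) (e : rel T) : Prop :=
  weighted_density e <= 5/16.

(* number of edges between U and V (ordered pairs (u,v), u in U, v in V) *)
Definition e_between (T : finType) (e : rel T) (U V : {set T}) : nat :=
  #|[set p : T * T | [&& p.1 \in U, p.2 \in V & e p.1 p.2]]|.

Definition quasirandom (T : finType) (e : rel T) (delta : R) : Prop :=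
  forall U V : {set T}, [disjoint U & V] ->
    delta * #|T|%:R <= #|U|%:R -> delta * #|T|%:R <= #|V|%:R ->
    (1/2 - delta) * (#|U| * #|V|)%:R <= (e_between e U V)%:R
    <= (1/2 + delta) * (#|U| * #|V|)%:R.

(* Main.v *)
Require Import Defs.
From HB Require Import structures.
From Stdlib Require Import Reals.
From mathcomp Require Import all_boot all_order all_algebra.
From mathcomp Require Import Rstruct.
Import Order.TTheory GRing.Theory Num.Theory.
Local Open Scope ring_scope.


From mathcomp Require Import ring lra.
Set Implicit Arguments. Unset Strict Implicit. Unset Printing Implicit Defensive.

Definition o0 : 'I_4 := @Ordinal 4 0 isT.
Definition o1 : 'I_4 := @Ordinal 4 1 isT.
Definition o2 : 'I_4 := @Ordinal 4 2 isT.
Definition o3 : 'I_4 := @Ordinal 4 3 isT.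
Definition ords := [:: o0; o1; o2; o3].
Lemma ords_all (i : 'I_4) : i \in ords.
Proof. by case: i => [[|[|[|[|m]]]] Hm]; rewrite !inE -?val_eqE. Qed.
Definition perms : seq (seq 'I_4) := [:: [:: o0; o1; o2; o3]; [:: o0; o1; o3; o2]; [:: o0; o2; o1; o3]; [:: o0; o2; o3; o1]; [:: o0; o3; o1; o2]; [:: o0; o3; o2; o1]; [:: o1; o0; o2; o3]; [:: o1; o0; o3; o2]; [:: o1; o2; o0; o3]; [:: o1; o2; o3; o0]; [:: o1; o3; o0; o2]; [:: o1; o3; o2; o0]; [:: o2; o0; o1; o3]; [:: o2; o0; o3; o1]; [:: o2; o1; o0; o3]; [:: o2; o1; o3; o0]; [:: o2; o3; o0; o1]; [:: o2; o3; o1; o0]; [:: o3; o0; o1; o2]; [:: o3; o0; o2; o1]; [:: o3; o1; o0; o2]; [:: o3; o1; o2; o0]; [:: o3; o2; o0; o1]; [:: o3; o2; o1; o0]].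
Definition sL (L : seq 'I_4) (i : 'I_4) : 'I_4 := nth o0 L i.

Definition mkG (b01 b02 b03 b12 b13 b23 : bool) : rel 'I_4 := fun i j =>
  match nat_of_ord i, nat_of_ord j with
  | 0, 1 | 1, 0 => b01 | 0, 2 | 2, 0 => b02 | 0, 3 | 3, 0 => b03
  | 1, 2 | 2, 1 => b12 | 1, 3 | 3, 1 => b13 | 2, 3 | 3, 2 => b23
  | _, _ => false end%N.

Definition YZ {F : realFieldType} (G : rel 'I_4) (i j : 'I_4) : F :=
  if G i j then 1 else if eqn (nat_of_ord i) (nat_of_ord j) then 0 else -1.

Definition G0' {F : realFieldType} (Z : 'I_4 -> 'I_4 -> F) : F :=
  5/16 + 1/4 * (Z o0 o1 * Z o0 o2) + 1/8 * (Z o0 o1 * Z o2 o3)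
  + 1/4 * (Z o0 o1 * Z o1 o2 * Z o2 o3)
  + 1/16 * (Z o0 o1 * Z o1 o2 * Z o2 o3 * Z o3 o0).

Definition Gs {F : realFieldType} (Z : 'I_4 -> 'I_4 -> F) : F :=
  1/24 * \sum_(L <- perms) G0' (fun i j => Z (sL L i) (sL L j)).

Definition Hs : seq (rel 'I_4) := [:: K4; compl_graph K4; D4; compl_graph D4; P3; compl_graph P3;
  C4; compl_graph C4; K13; compl_graph K13; P4].
Definition ws (F : realFieldType) : seq F := [:: 1; 1/2; 5/12; 5/12; 1/3; 1/6; 1/2; 1/3; 1/4; 1/4; 1/4].
Lemma weights_eq : weights = zip Hs (ws R). Proof. by []. Qed.

Definition isoc (G H : rel 'I_4) (L : seq 'I_4) : bool :=
  all (fun i => all (fun j => G (sL L i) (sL L j) == H i j) ords) ords.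
Definition yv {F : realFieldType} (b : bool) : F := if b then 1 else -1.
Definition Fpoly {F : realFieldType} b01 b02 b03 b12 b13 b23 : F := 5/16 + 1/48 * ((yv b13 * yv b23) + (yv b12 * yv b23) + (yv b12 * yv b13) + (yv b03 * yv b23) + (yv b03 * yv b13) + 2 * (yv b03 * yv b12) + (yv b03 * yv b12 * yv b23) + (yv b03 * yv b12 * yv b13) + (yv b02 * yv b23) + 2 * (yv b02 * yv b13) + (yv b02 * yv b13 * yv b23) + (yv b02 * yv b12) + (yv b02 * yv b12 * yv b13) + (yv b02 * yv b03) + (yv b02 * yv b03 * yv b13) + (yv b02 * yv b03 * yv b12) + (yv b02 * yv b03 * yv b12 * yv b13) + 2 * (yv b01 * yv b23) + (yv b01 * yv b13) + (yv b01 * yv b13 * yv b23) + (yv b01 * yv b12) + (yv b01 * yv b12 * yv b23) + (yv b01 * yv b03) + (yv b01 * yv b03 * yv b23) + (yv b01 * yv b03 * yv b12) + (yv b01 * yv b03 * yv b12 * yv b23) + (yv b01 * yv b02) + (yv b01 * yv b02 * yv b23) + (yv b01 * yv b02 * yv b13) + (yv b01 * yv b02 * yv b13 * yv b23)).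
Lemma Gs_formula (F : realFieldType) b01 b02 b03 b12 b13 b23 : Gs (YZ (F:=F) (mkG b01 b02 b03 b12 b13 b23)) = Fpoly b01 b02 b03 b12 b13 b23.
Proof. rewrite /Gs /G0' !big_cons big_nil /YZ /sL /mkG /o0 /o1 /o2 /o3; cbn [nth nat_of_ord eqn]. rewrite /Fpoly -/(yv b01) -/(yv b02) -/(yv b03) -/(yv b12) -/(yv b13) -/(yv b23).
  move: (yv b01) (yv b02) (yv b03) (yv b12) (yv b13) (yv b23) => u01 u02 u03 u12 u13 u23. field. by []. Qed.
Lemma fincheck (F : realFieldType) b01 b02 b03 b12 b13 b23 : exists k, (k < 11)%N /\ (exists2 L, L \in perms & isoc (mkG b01 b02 b03 b12 b13 b23) (nth K4 Hs k) L) /\ Gs (YZ (F:=F) (mkG b01 b02 b03 b12 b13 b23)) = nth 0 (ws F) k.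
Proof.
rewrite Gs_formula /Fpoly.
case: b01; case: b02; case: b03; case: b12; case: b13; case: b23; rewrite /yv.
- exists 0%N; split; first by []. split; first by exists [:: o0; o1; o2; o3]; vm_compute; reflexivity.
  cbn [nth ws]; lra.
- exists 2%N; split; first by []. split; first by exists [:: o0; o1; o2; o3]; vm_compute; reflexivity.
  cbn [nth ws]; lra.
- exists 2%N; split; first by []. split; first by exists [:: o0; o2; o1; o3]; vm_compute; reflexivity.
  cbn [nth ws]; lra.
- exists 5%N; split; first by []. split; first by exists [:: o1; o3; o2; o0]; vm_compute; reflexivity.
  cbn [nth ws]; lra.
- exists 2%N; split; first by []. split; first by exists [:: o0; o3; o1; o2]; vm_compute; reflexivity.
  cbn [nth ws]; lra.
- exists 5%N; split; first by []. split; first by exists [:: o1; o2; o3; o0]; vm_compute; reflexivity.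
  cbn [nth ws]; lra.
- exists 5%N; split; first by []. split; first by exists [:: o2; o1; o3; o0]; vm_compute; reflexivity.
  cbn [nth ws]; lra.
- exists 8%N; split; first by []. split; first by exists [:: o0; o1; o2; o3]; vm_compute; reflexivity.
  cbn [nth ws]; lra.
- exists 2%N; split; first by []. split; first by exists [:: o1; o2; o0; o3]; vm_compute; reflexivity.
  cbn [nth ws]; lra.
- exists 5%N; split; first by []. split; first by exists [:: o0; o3; o2; o1]; vm_compute; reflexivity.
  cbn [nth ws]; lra.
- exists 5%N; split; first by []. split; first by exists [:: o0; o3; o1; o2]; vm_compute; reflexivity.
  cbn [nth ws]; lra.
- exists 9%N; split; first by []. split; first by exists [:: o3; o0; o1; o2]; vm_compute; reflexivity.
  cbn [nth ws]; lra.
- exists 6%N; split; first by []. split; first by exists [:: o0; o1; o3; o2]; vm_compute; reflexivity.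
  cbn [nth ws]; lra.
- exists 10%N; split; first by []. split; first by exists [:: o2; o0; o1; o3]; vm_compute; reflexivity.
  cbn [nth ws]; lra.
- exists 10%N; split; first by []. split; first by exists [:: o1; o0; o2; o3]; vm_compute; reflexivity.
  cbn [nth ws]; lra.
- exists 4%N; split; first by []. split; first by exists [:: o1; o0; o2; o3]; vm_compute; reflexivity.
  cbn [nth ws]; lra.
- exists 2%N; split; first by []. split; first by exists [:: o1; o3; o0; o2]; vm_compute; reflexivity.
  cbn [nth ws]; lra.
- exists 5%N; split; first by []. split; first by exists [:: o0; o2; o3; o1]; vm_compute; reflexivity.
  cbn [nth ws]; lra.
- exists 6%N; split; first by []. split; first by exists [:: o0; o1; o2; o3]; vm_compute; reflexivity.
  cbn [nth ws]; lra.
- exists 10%N; split; first by []. split; first by exists [:: o2; o1; o0; o3]; vm_compute; reflexivity.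
  cbn [nth ws]; lra.
- exists 5%N; split; first by []. split; first by exists [:: o0; o2; o1; o3]; vm_compute; reflexivity.
  cbn [nth ws]; lra.
- exists 9%N; split; first by []. split; first by exists [:: o2; o0; o1; o3]; vm_compute; reflexivity.
  cbn [nth ws]; lra.
- exists 10%N; split; first by []. split; first by exists [:: o1; o0; o3; o2]; vm_compute; reflexivity.
  cbn [nth ws]; lra.
- exists 4%N; split; first by []. split; first by exists [:: o1; o0; o3; o2]; vm_compute; reflexivity.
  cbn [nth ws]; lra.
- exists 5%N; split; first by []. split; first by exists [:: o2; o0; o3; o1]; vm_compute; reflexivity.
  cbn [nth ws]; lra.
- exists 8%N; split; first by []. split; first by exists [:: o1; o0; o2; o3]; vm_compute; reflexivity.
  cbn [nth ws]; lra.
- exists 10%N; split; first by []. split; first by exists [:: o0; o1; o2; o3]; vm_compute; reflexivity.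
  cbn [nth ws]; lra.
- exists 4%N; split; first by []. split; first by exists [:: o0; o1; o2; o3]; vm_compute; reflexivity.
  cbn [nth ws]; lra.
- exists 10%N; split; first by []. split; first by exists [:: o0; o1; o3; o2]; vm_compute; reflexivity.
  cbn [nth ws]; lra.
- exists 4%N; split; first by []. split; first by exists [:: o0; o1; o3; o2]; vm_compute; reflexivity.
  cbn [nth ws]; lra.
- exists 7%N; split; first by []. split; first by exists [:: o0; o2; o1; o3]; vm_compute; reflexivity.
  cbn [nth ws]; lra.
- exists 3%N; split; first by []. split; first by exists [:: o2; o3; o0; o1]; vm_compute; reflexivity.
  cbn [nth ws]; lra.
- exists 2%N; split; first by []. split; first by exists [:: o2; o3; o0; o1]; vm_compute; reflexivity.
  cbn [nth ws]; lra.
- exists 6%N; split; first by []. split; first by exists [:: o0; o2; o1; o3]; vm_compute; reflexivity.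
  cbn [nth ws]; lra.
- exists 5%N; split; first by []. split; first by exists [:: o0; o1; o3; o2]; vm_compute; reflexivity.
  cbn [nth ws]; lra.
- exists 10%N; split; first by []. split; first by exists [:: o1; o2; o0; o3]; vm_compute; reflexivity.
  cbn [nth ws]; lra.
- exists 5%N; split; first by []. split; first by exists [:: o0; o1; o2; o3]; vm_compute; reflexivity.
  cbn [nth ws]; lra.
- exists 10%N; split; first by []. split; first by exists [:: o1; o3; o0; o2]; vm_compute; reflexivity.
  cbn [nth ws]; lra.
- exists 9%N; split; first by []. split; first by exists [:: o1; o0; o2; o3]; vm_compute; reflexivity.
  cbn [nth ws]; lra.
- exists 4%N; split; first by []. split; first by exists [:: o2; o0; o3; o1]; vm_compute; reflexivity.
  cbn [nth ws]; lra.
- exists 5%N; split; first by []. split; first by exists [:: o1; o0; o3; o2]; vm_compute; reflexivity.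
  cbn [nth ws]; lra.
- exists 10%N; split; first by []. split; first by exists [:: o0; o2; o1; o3]; vm_compute; reflexivity.
  cbn [nth ws]; lra.
- exists 8%N; split; first by []. split; first by exists [:: o2; o0; o1; o3]; vm_compute; reflexivity.
  cbn [nth ws]; lra.
- exists 4%N; split; first by []. split; first by exists [:: o0; o2; o1; o3]; vm_compute; reflexivity.
  cbn [nth ws]; lra.
- exists 10%N; split; first by []. split; first by exists [:: o0; o2; o3; o1]; vm_compute; reflexivity.
  cbn [nth ws]; lra.
- exists 7%N; split; first by []. split; first by exists [:: o0; o1; o2; o3]; vm_compute; reflexivity.
  cbn [nth ws]; lra.
- exists 4%N; split; first by []. split; first by exists [:: o0; o2; o3; o1]; vm_compute; reflexivity.
  cbn [nth ws]; lra.
- exists 3%N; split; first by []. split; first by exists [:: o1; o3; o0; o2]; vm_compute; reflexivity.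
  cbn [nth ws]; lra.
- exists 5%N; split; first by []. split; first by exists [:: o1; o0; o2; o3]; vm_compute; reflexivity.
  cbn [nth ws]; lra.
- exists 10%N; split; first by []. split; first by exists [:: o0; o3; o1; o2]; vm_compute; reflexivity.
  cbn [nth ws]; lra.
- exists 10%N; split; first by []. split; first by exists [:: o0; o3; o2; o1]; vm_compute; reflexivity.
  cbn [nth ws]; lra.
- exists 7%N; split; first by []. split; first by exists [:: o0; o1; o3; o2]; vm_compute; reflexivity.
  cbn [nth ws]; lra.
- exists 8%N; split; first by []. split; first by exists [:: o3; o0; o1; o2]; vm_compute; reflexivity.
  cbn [nth ws]; lra.
- exists 4%N; split; first by []. split; first by exists [:: o0; o3; o1; o2]; vm_compute; reflexivity.
  cbn [nth ws]; lra.
- exists 4%N; split; first by []. split; first by exists [:: o0; o3; o2; o1]; vm_compute; reflexivity.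
  cbn [nth ws]; lra.
- exists 3%N; split; first by []. split; first by exists [:: o1; o2; o0; o3]; vm_compute; reflexivity.
  cbn [nth ws]; lra.
- exists 9%N; split; first by []. split; first by exists [:: o0; o1; o2; o3]; vm_compute; reflexivity.
  cbn [nth ws]; lra.
- exists 4%N; split; first by []. split; first by exists [:: o2; o1; o3; o0]; vm_compute; reflexivity.
  cbn [nth ws]; lra.
- exists 4%N; split; first by []. split; first by exists [:: o1; o2; o3; o0]; vm_compute; reflexivity.
  cbn [nth ws]; lra.
- exists 3%N; split; first by []. split; first by exists [:: o0; o3; o1; o2]; vm_compute; reflexivity.
  cbn [nth ws]; lra.
- exists 4%N; split; first by []. split; first by exists [:: o1; o3; o2; o0]; vm_compute; reflexivity.
  cbn [nth ws]; lra.
- exists 3%N; split; first by []. split; first by exists [:: o0; o2; o1; o3]; vm_compute; reflexivity.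
  cbn [nth ws]; lra.
- exists 3%N; split; first by []. split; first by exists [:: o0; o1; o2; o3]; vm_compute; reflexivity.
  cbn [nth ws]; lra.
- exists 1%N; split; first by []. split; first by exists [:: o0; o1; o2; o3]; vm_compute; reflexivity.
  cbn [nth ws]; lra.
Qed.

Lemma cs_card (F : realFieldType) (I : finType) (A : pred I) (f : I -> F) :
  (\sum_(i in A) f i) ^+ 2 <= #|A|%:R * \sum_(i in A) f i ^+ 2.
Proof.
set S := \sum_(i in A) f i; set S2 := \sum_(i in A) f i ^+ 2; set N : F := #|A|%:R.
have H : 0 <= \sum_(i in A) \sum_(j in A) (f i - f j) ^+ 2.
  by apply: sumr_ge0 => i _; apply: sumr_ge0 => j _; exact: sqr_ge0.
have E : forall i, \sum_(j in A) (f i - f j) ^+ 2 = N * f i ^+ 2 - 2 * f i * S + S2.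
  move=> i.
  have -> : \sum_(j in A) (f i - f j) ^+ 2 =
     \sum_(j in A) (f i ^+ 2 + (- (2 * f i) * f j + f j ^+ 2)).
    by apply: eq_bigr => j _; ring.
  rewrite big_split big_split /= sumr_const -mulr_sumr /S /S2 /N -mulr_natl; ring.
rewrite (eq_bigr _ (fun i _ => E i)) big_split /= sumrB /= -mulr_sumr -mulr_suml -/S2 -/S in H.
rewrite sumr_const -mulr_natl -/N in H.
rewrite (eq_bigr (fun i => 2 * f i)) in H; last by move=> i _; rewrite mulr1.
rewrite -mulr_sumr -/S -mulr_natr -/N in H. nra.
Qed.

Definition Yf {F : realFieldType} {T : finType} (e : rel T) (a b : T) : F :=
  if e a b then 1 else if a == b then 0 else -1.
Definition Zf {F : realFieldType} {T : finType} (e : rel T) (a c : T) : F :=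
  \sum_b Yf e a b * Yf e b c.
Definition Qf {F : realFieldType} {T : finType} (e : rel T) : F :=
  \sum_a \sum_c (Zf (F:=F) e a c) ^+ 2.

Lemma Yf_sym (F : realFieldType) (T : finType) (e : rel T) : symmetric e ->
  forall a b, Yf (F:=F) e a b = Yf e b a.
Proof. by move=> se a b; rewrite /Yf se eq_sym. Qed.

Lemma Yf_norm (F : realFieldType) (T : finType) (e : rel T) a b : `|Yf (F:=F) e a b| <= 1.
Proof. by rewrite /Yf; case: (e a b); [|case: (a == b)]; rewrite ?normr1 ?normr0 ?normrN1. Qed.

Lemma sub_sum_le (F : realFieldType) (I : finType) (A : pred I) (g : I -> F) :
  (forall i, 0 <= g i) -> \sum_(i in A) g i <= \sum_i g i.
Proof.
move=> g0; rewrite big_mkcond /=; apply: ler_sum => i _.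
by case: (i \in A).
Qed.

Lemma disc4 (F : realFieldType) (T : finType) (e : rel T) (U V : pred T) :
  symmetric e ->
  (\sum_(a in U) \sum_(b in V) Yf (F:=F) e a b) ^+ 4
    <= (#|U|%:R) ^+ 2 * (#|V|%:R) ^+ 2 * Qf (F:=F) e.
Proof.
move=> se.
set X := \sum_(a in U) _.
set w := fun a => \sum_(b in V) Yf (F:=F) e a b.
set u : F := #|U|%:R; set v : F := #|V|%:R.
have u0 : 0 <= u by rewrite ler0n.
have v0 : 0 <= v by rewrite ler0n.
have h1 : X ^+ 2 <= u * \sum_(a in U) w a ^+ 2 by exact: cs_card.
have h2 : \sum_(a in U) w a ^+ 2 <= \sum_a w a ^+ 2.
  by apply: sub_sum_le => a; exact: sqr_ge0.
have h3 : \sum_a w a ^+ 2 = \sum_(b in V) \sum_(c in V) Zf (F:=F) e b c.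
  rewrite /Zf.
  have -> : \sum_a w a ^+ 2 = \sum_a \sum_(b in V) \sum_(c in V) (Yf (F:=F) e b a * Yf e a c).
    apply: eq_bigr => a _; rewrite /w expr2 big_distrlr /=.
    by apply: eq_bigr => b _; apply: eq_bigr => c _; rewrite (Yf_sym F se a b).
  rewrite exchange_big /=; apply: eq_bigr => b _.
  by rewrite exchange_big.
set W := \sum_a w a ^+ 2.
have W0 : 0 <= W by apply: sumr_ge0 => a _; exact: sqr_ge0.
have h4 : W ^+ 2 <= v ^+ 2 * Qf (F:=F) e.
  rewrite /W h3.
  apply: (le_trans (cs_card _ _)).
  have h5 : forall b, (\sum_(c in V) Zf (F:=F) e b c) ^+ 2 <= v * \sum_(c in V) Zf (F:=F) e b c ^+ 2.
    by move=> b; exact: cs_card.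
  apply: (le_trans (ler_wpM2l v0 (ler_sum _ (fun b _ => h5 b)))).
  rewrite -mulr_sumr mulrA -expr2; apply: ler_wpM2l; first exact: sqr_ge0.
  apply: (le_trans (sub_sum_le _ _)); last first.
    apply: ler_sum => b _; apply: sub_sum_le => c; exact: sqr_ge0.
  by move=> b; apply: sumr_ge0 => c _; exact: sqr_ge0.
have X2 : 0 <= X ^+ 2 by exact: sqr_ge0.
have h6 : X ^+ 2 <= u * W by apply: (le_trans h1); apply: ler_wpM2l.
have -> : X ^+ 4 = (X ^+ 2) ^+ 2 by rewrite -exprM.
have h7 : (X ^+ 2) ^+ 2 <= (u * W) ^+ 2.
  by rewrite !expr2; apply: ler_pM.
apply: (le_trans h7); rewrite exprMn -mulrA; apply: ler_wpM2l; first exact: sqr_ge0.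
done.
Qed.
Lemma sumc (F : realFieldType) (T : finType) (x : F) : \sum_(i : T) x = #|T|%:R * x.
Proof. by rewrite sumr_const mulr_natl. Qed.
Definition ddf {F : realFieldType} {T : finType} (e : rel T) (a : T) : F := \sum_b Yf e a b.


Lemma m2_eq (F : realFieldType) (T : finType) (e : rel T) :
  \sum_(a : T) \sum_(b : T) \sum_(c : T) \sum_(d : T) (Yf (F:=F) e a b * Yf e a c)
  = #|T|%:R * \sum_a ddf (F:=F) e a ^+ 2.
Proof.
rewrite mulr_sumr; apply: eq_bigr => a _.
rewrite expr2 /ddf big_distrlr mulr_sumr /=; apply: eq_bigr => b _.
rewrite mulr_sumr; apply: eq_bigr => c _.
by rewrite sumc.
Qed.

Lemma m3_eq (F : realFieldType) (T : finType) (e : rel T) :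
  \sum_(a : T) \sum_(b : T) \sum_(c : T) \sum_(d : T) (Yf (F:=F) e a b * Yf e c d)
  = (\sum_a \sum_b Yf (F:=F) e a b) ^+ 2.
Proof.
rewrite expr2 mulr_suml; apply: eq_bigr => a _.
rewrite mulr_suml; apply: eq_bigr => b _.
rewrite mulr_sumr; apply: eq_bigr => c _.
by rewrite mulr_sumr.
Qed.

Lemma m4_eq (F : realFieldType) (T : finType) (e : rel T) : symmetric e ->
  \sum_(a : T) \sum_(b : T) \sum_(c : T) \sum_(d : T) (Yf (F:=F) e a b * Yf e b c * Yf e c d)
  = \sum_b \sum_c ddf (F:=F) e b * Yf e b c * ddf e c.
Proof.
move=> se.
have -> : \sum_(a : T) \sum_(b : T) \sum_(c : T) \sum_(d : T) (Yf (F:=F) e a b * Yf e b c * Yf e c d)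
   = \sum_(a : T) \sum_(b : T) \sum_(c : T) (Yf (F:=F) e a b * Yf e b c * ddf e c).
  by apply: eq_bigr => a _; apply: eq_bigr => b _; apply: eq_bigr => c _; rewrite /ddf mulr_sumr.
rewrite exchange_big /=; apply: eq_bigr => b _.
rewrite exchange_big /=; apply: eq_bigr => c _.
rewrite /ddf -!mulr_suml; congr (_ * _ * _).
by apply: eq_bigr => a _; rewrite Yf_sym.
Qed.

Lemma m5_eq (F : realFieldType) (T : finType) (e : rel T) : symmetric e ->
  \sum_(a : T) \sum_(b : T) \sum_(c : T) \sum_(d : T)
     (Yf (F:=F) e a b * Yf e b c * Yf e c d * Yf e d a) = Qf (F:=F) e.
Proof.
move=> se; rewrite /Qf; apply: eq_bigr => a _.
rewrite exchange_big /=; apply: eq_bigr => c _.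
have -> : Zf (F:=F) e a c ^+ 2 = Zf e a c * Zf e c a.
  congr (_ * _); rewrite /Zf; apply: eq_bigr => b _.
  by rewrite mulrC (Yf_sym _ se c b) (Yf_sym _ se b a).
rewrite /Zf big_distrlr /=; apply: eq_bigr => b _.
apply: eq_bigr => d _; ring.
Qed.

Lemma nD_P_ge0 (F : realFieldType) (T : finType) (e : rel T) :
  0 <= #|T|%:R * \sum_a ddf (F:=F) e a ^+ 2 + \sum_b \sum_c ddf (F:=F) e b * Yf e b c * ddf e c.
Proof.
set N : F := #|T|%:R.
have h1 : - (\sum_b `|ddf (F:=F) e b|) ^+ 2 <= \sum_b \sum_c ddf (F:=F) e b * Yf e b c * ddf e c.
  rewrite expr2 mulr_suml -sumrN; apply: ler_sum => b _.
  rewrite mulr_sumr -sumrN; apply: ler_sum => c _.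
  have hn : `|ddf (F:=F) e b * Yf e b c * ddf e c| <= `|ddf (F:=F) e b| * `|ddf (F:=F) e c|.
    rewrite !normrM.
    have := Yf_norm F e b c; have := normr_ge0 (ddf (F:=F) e b); have := normr_ge0 (ddf (F:=F) e c).
    have := mulr_ge0 (normr_ge0 (ddf (F:=F) e b)) (normr_ge0 (ddf (F:=F) e c)).
    nra.
  have := ler_norm (- (ddf (F:=F) e b * Yf e b c * ddf e c)); rewrite normrN.
  lra.
have h2 := cs_card (I := T) predT (fun b => `|ddf (F:=F) e b|).
have e1 : \sum_(i in predT) (fun b => `|ddf (F:=F) e b|) i = \sum_b `|ddf (F:=F) e b| by apply: eq_bigl.
have e2 : \sum_(i in predT) (fun b => `|ddf (F:=F) e b|) i ^+ 2 = \sum_b ddf (F:=F) e b ^+ 2.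
  by apply: eq_big => // i; rewrite /= real_normK ?num_real.
rewrite e1 e2 in h2.
have e3 : (#|(predT : pred T)|%:R : F) = N by rewrite /N; congr (_%:R); apply: eq_card => x; rewrite !inE.
rewrite e3 in h2.
lra.
Qed.


Definition h4 {T : finType} (p : T * (T * (T * T))) : {ffun 'I_4 -> T} :=
  [ffun i : 'I_4 => nth p.1 [:: p.1; p.2.1; p.2.2.1; p.2.2.2] i].
Definition g4 {T : finType} (t : {ffun 'I_4 -> T}) : T * (T * (T * T)) :=
  (t o0, (t o1, (t o2, t o3))).

Lemma h4K (T : finType) : cancel (@g4 T) h4.
Proof.
move=> t; apply/ffunP => i; rewrite ffunE.
by case: i => [[|[|[|[|m]]]] Hm] //=; congr (t _); apply: val_inj.
Qed.
Lemma g4K (T : finType) : cancel (@h4 T) g4.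
Proof. by case=> a [b [c d]]; rewrite /g4 !ffunE. Qed.

Lemma sum_ffun4 (F : realFieldType) (T : finType) (Phi : T -> T -> T -> T -> F) :
  \sum_(t : {ffun 'I_4 -> T}) Phi (t o0) (t o1) (t o2) (t o3)
  = \sum_a \sum_b \sum_c \sum_d Phi a b c d.
Proof.
rewrite (reindex (@h4 T)); last by apply: onW_bij; exists g4; [exact: g4K | exact: h4K].
have -> : \sum_a \sum_b \sum_c \sum_d Phi a b c d
   = \sum_a \sum_b \sum_(q : T * T) Phi a b q.1 q.2.
  by apply: eq_bigr => a _; apply: eq_bigr => b _; rewrite pair_bigA.
have -> : \sum_a \sum_b \sum_(q : T * T) Phi a b q.1 q.2
   = \sum_a \sum_(r : T * (T * T)) Phi a r.1 r.2.1 r.2.2.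
  by apply: eq_bigr => a _; rewrite pair_bigA.
rewrite pair_bigA; apply: eq_bigr => p _.
by rewrite !ffunE.
Qed.

Definition S4 {F : realFieldType} {T : finType} (f : T -> T -> T -> T -> F) : F :=
  \sum_a \sum_b \sum_c \sum_d f a b c d.

Lemma S4D (F : realFieldType) (T : finType) (f g : T -> T -> T -> T -> F) :
  S4 (fun a b c d => f a b c d + g a b c d) = S4 f + S4 g.
Proof.
rewrite /S4 -big_split; apply: eq_bigr => a _; rewrite -big_split; apply: eq_bigr => b _.
rewrite -big_split; apply: eq_bigr => c _; by rewrite -big_split.
Qed.

Lemma S4Z (F : realFieldType) (T : finType) (k : F) (f : T -> T -> T -> T -> F) :
  S4 (fun a b c d => k * f a b c d) = k * S4 f.
Proof.
rewrite /S4 mulr_sumr; apply: eq_bigr => a _; rewrite mulr_sumr; apply: eq_bigr => b _.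
rewrite mulr_sumr; apply: eq_bigr => c _; by rewrite mulr_sumr.
Qed.

Lemma S4c (F : realFieldType) (T : finType) (k : F) :
  S4 (fun (a b c d : T) => k) = k * (#|T|%:R) ^+ 4.
Proof.
rewrite /S4 !sumc; ring.
Qed.

Definition G0t {F : realFieldType} {T : finType} (e : rel T) (t : {ffun 'I_4 -> T}) : F :=
  G0' (fun i j => Yf e (t i) (t j)).

Lemma sum_G0_ge (F : realFieldType) (T : finType) (e : rel T) : symmetric e ->
  5/16 * (#|T|%:R) ^+ 4 + 1/16 * Qf (F:=F) e <= \sum_t G0t (F:=F) e t.
Proof.
move=> se.
rewrite /G0t /G0'.
rewrite (sum_ffun4 (fun a b c d => 5/16 + 1/4 * (Yf (F:=F) e a b * Yf e a c) + 1/8 * (Yf e a b * Yf e c d)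
  + 1/4 * (Yf e a b * Yf e b c * Yf e c d)
  + 1/16 * (Yf e a b * Yf e b c * Yf e c d * Yf e d a))).
rewrite -/(S4 _).
rewrite (S4D (fun a b c d => 5/16 + 1/4 * (Yf (F:=F) e a b * Yf e a c) + 1/8 * (Yf e a b * Yf e c d)
  + 1/4 * (Yf e a b * Yf e b c * Yf e c d))).
rewrite (S4D (fun a b c d => 5/16 + 1/4 * (Yf (F:=F) e a b * Yf e a c) + 1/8 * (Yf e a b * Yf e c d))).
rewrite (S4D (fun a b c d => 5/16 + 1/4 * (Yf (F:=F) e a b * Yf e a c))).
rewrite (S4D (fun a b c d => 5/16)).
rewrite S4c !S4Z.
rewrite /S4 m2_eq m3_eq m4_eq // m5_eq //.
have := nD_P_ge0 F e.
have := sqr_ge0 (\sum_a \sum_b Yf (F:=F) e a b).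
lra.
Qed.

Definition GSt {F : realFieldType} {T : finType} (e : rel T) (t : {ffun 'I_4 -> T}) : F :=
  Gs (fun i j => Yf e (t i) (t j)).

Lemma eq_G0' (F : realFieldType) (Z Z' : 'I_4 -> 'I_4 -> F) :
  (forall i j, Z i j = Z' i j) -> G0' Z = G0' Z'.
Proof. by move=> H; rewrite /G0' !H. Qed.

Lemma eq_Gs (F : realFieldType) (Z Z' : 'I_4 -> 'I_4 -> F) :
  (forall i j, Z i j = Z' i j) -> Gs Z = Gs Z'.
Proof. by move=> H; rewrite /Gs; congr (_ * _); apply: eq_bigr => L _; apply: eq_G0' => i j. Qed.

Lemma perms_inj_check :
  all (fun L => all (fun i => all (fun j => (sL L i == sL L j) ==> (i == j)) ords) ords) perms.
Proof. by vm_compute. Qed.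

Lemma sL_inj L : L \in perms -> injective (sL L).
Proof.
move=> HL i j Hij.
have := allP perms_inj_check L HL => /allP /(_ i (ords_all i)) /allP /(_ j (ords_all j)).
by rewrite Hij eqxx /= => /eqP.
Qed.

Definition compL {T : finType} (L : seq 'I_4) (t : {ffun 'I_4 -> T}) : {ffun 'I_4 -> T} :=
  [ffun i => t (sL L i)].

Lemma compL_inj (T : finType) L : L \in perms -> injective (@compL T L).
Proof.
move=> HL t t' H; apply/ffunP => i.
have [g _ gK] := injF_bij (sL_inj HL).
have := congr1 (fun f : {ffun 'I_4 -> T} => f (g i)) H.
by rewrite /compL !ffunE gK.
Qed.

Lemma sum_GS_eq (F : realFieldType) (T : finType) (e : rel T) :
  \sum_t GSt (F:=F) e t = \sum_t G0t (F:=F) e t.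
Proof.
have E : forall t, GSt (F:=F) e t = 1/24 * \sum_(L <- perms) G0t e (compL L t).
  move=> t; rewrite /GSt /Gs; congr (_ * _); apply: eq_bigr => L _.
  by apply: eq_G0' => i j; rewrite /compL !ffunE.
rewrite (eq_bigr _ (fun t _ => E t)) -mulr_sumr exchange_big /=.
have E2 : forall L, L \in perms -> \sum_t G0t (F:=F) e (compL L t) = \sum_t G0t (F:=F) e t.
  by move=> L HL; rewrite [RHS](reindex_inj (compL_inj HL)).
rewrite big_seq_cond (eq_bigr (fun _ => \sum_t G0t (F:=F) e t)); last by move=> L /andP[HL _]; exact: E2.
rewrite -big_seq_cond !big_cons big_nil.
lra.
Qed.

Lemma nrm_mul1 (F : realFieldType) (x y : F) : `|x| <= 1 -> `|y| <= 1 -> `|x * y| <= 1.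
Proof. by move=> hx hy; rewrite normrM; apply: mulr_ile1. Qed.

Lemma G0'_le1 (F : realFieldType) (Z : 'I_4 -> 'I_4 -> F) :
  (forall i j, `|Z i j| <= 1) -> G0' Z <= 1.
Proof.
move=> H; rewrite /G0'.
have h1 := ler_normlW (nrm_mul1 (H o0 o1) (H o0 o2)).
have h2 := ler_normlW (nrm_mul1 (H o0 o1) (H o2 o3)).
have h3 := ler_normlW (nrm_mul1 (nrm_mul1 (H o0 o1) (H o1 o2)) (H o2 o3)).
have h4 := ler_normlW (nrm_mul1 (nrm_mul1 (nrm_mul1 (H o0 o1) (H o1 o2)) (H o2 o3)) (H o3 o0)).
lra.
Qed.

Lemma GS_le1 (F : realFieldType) (T : finType) (e : rel T) t : GSt (F:=F) e t <= 1.
Proof.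
rewrite /GSt /Gs.
have H : \sum_(L <- perms) G0' (fun i j => Yf (F:=F) e (t (sL L i)) (t (sL L j))) <= \sum_(L <- perms) (1 : F).
  by apply: ler_sum => L _; apply: G0'_le1 => i j; exact: Yf_norm.
have h0 : (0:F) <= 1/24 by lra.
apply: (le_trans (ler_wpM2l h0 H)).
rewrite !big_cons big_nil; lra.
Qed.

Lemma ws_ge0 (F : realFieldType) i : 0 <= nth 0 (ws F) i.
Proof. do 11? case: i => [|i]; rewrite /=; try lra. by rewrite nth_nil. Qed.

Lemma cancel_lem (F : realFieldType) (c w x : F) : c != 0 -> c * (w * (x / c)) = w * x.
Proof. by move=> hc; field. Qed.

Lemma pi_arith (F : realFieldType) (c w : F) : 0 <= c -> w <= 5/16 -> 24 * (c * w) <= 5/16 * (c * 24).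
Proof. by move=> hc hw; nra. Qed.

Lemma q_arith (F : realFieldType) (x4 a x3 Q : F) :
  5/16 * x4 + 1/16 * Q <= 5/16 * a + (x4 - a) -> x4 <= a + 6 * x3 -> Q <= 66 * x3.
Proof. by move=> h1 h2; lra. Qed.

Lemma r_arith (F : realFieldType) (r x : F) : 0 < r -> r <= 1 -> r ^+ 24 * x = 1 -> 0 <= x -> 1 <= r ^+ 8 * x.
Proof.
move=> r0 r1 h x0.
have h16 : r ^+ 16 <= 1 by apply: exprn_ile1; [exact: ltW|].
have h8 : 0 <= r ^+ 8 * x by apply: mulr_ge0; [apply: exprn_ge0; exact: ltW|].
have e1 : r ^+ 24 * x = r ^+ 16 * (r ^+ 8 * x) by rewrite mulrA -exprD.
rewrite e1 in h.
nra.
Qed.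

Lemma gen24 (F : realFieldType) : (- (1 / 24) : F) * 24%:R = -1.
Proof. by field. Qed.
Lemma gen24n (F : realFieldType) : (- (1 / 24) : F) <= 0.
Proof. lra. Qed.

Lemma ord4_cases (i : 'I_4) : [\/ i = o0, i = o1, i = o2 | i = o3].
Proof.
have := ords_all i; rewrite !inE => /or4P [] /eqP ->;
  [exact: Or41 | exact: Or42 | exact: Or43 | exact: Or44].
Qed.

Lemma rel_mkG (G : rel 'I_4) : symmetric G -> irreflexive G ->
  forall i j, G i j = mkG (G o0 o1) (G o0 o2) (G o0 o3) (G o1 o2) (G o1 o3) (G o2 o3) i j.
Proof.
move=> Gs Gi i j.
by case: (ord4_cases i) => ->; case: (ord4_cases j) => ->; rewrite /mkG /= ?Gi // Gs.
Qed.

Definition Nw {T : finType} (e : rel T) (S : {set T}) : R :=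
  \sum_(hw <- weights) hw.2 * (induced_copy e hw.1 S)%:R.

Lemma Nw_nth (T : finType) (e : rel T) S :
  Nw e S = \sum_(k < 11) nth 0 (ws R) k * (induced_copy e (nth K4 Hs k) S)%:R.
Proof.
rewrite /Nw weights_eq (big_nth (K4, 0)) big_mkord.
by apply: eq_bigr => k _; rewrite nth_zip.
Qed.

Lemma wd_nth (T : finType) (e : rel T) :
  weighted_density e = \sum_(k < 11) nth 0 (ws R) k * p_ind e (nth K4 Hs k).
Proof.
rewrite /weighted_density weights_eq (big_nth (K4, 0)) big_mkord.
by apply: eq_bigr => k _; rewrite nth_zip.
Qed.

Lemma Nw_ge0 (T : finType) (e : rel T) S : 0 <= Nw e S.
Proof.
rewrite Nw_nth; apply: sumr_ge0 => k _; apply: mulr_ge0; [exact: ws_ge0 | exact: ler0n].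
Qed.

Lemma Nw_ge (T : finType) (e : rel T) S k : (k < 11)%N ->
  induced_copy e (nth K4 Hs k) S -> nth 0 (ws R) k <= Nw e S.
Proof.
move=> hk hic; rewrite Nw_nth (bigD1 (Ordinal hk)) //= hic mulr1 lerDl.
by apply: sumr_ge0 => i _; apply: mulr_ge0; [exact: ws_ge0 | exact: ler0n].
Qed.

Lemma GS_le_Nw (T : finType) (e : rel T) (t : {ffun 'I_4 -> T}) :
  symmetric e -> irreflexive e -> injectiveb t ->
  GSt (F:=R) e t <= Nw e (t @: setT).
Proof.
move=> se ie /injectiveP tinj.
pose G : rel 'I_4 := fun i j => e (t i) (t j).
have Gsym : symmetric G by move=> i j; rewrite /G se.
have Girr : irreflexive G by move=> i; rewrite /G ie.
have HG := rel_mkG Gsym Girr.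
have HY : forall i j, Yf (F:=R) e (t i) (t j)
   = YZ (mkG (G o0 o1) (G o0 o2) (G o0 o3) (G o1 o2) (G o1 o3) (G o2 o3)) i j.
  move=> i j; rewrite /Yf /YZ -HG /G (inj_eq tinj).
  by [].
rewrite /GSt (eq_Gs HY).
have [k [hk [[L HL Hiso] Hval]]] := fincheck R (G o0 o1) (G o0 o2) (G o0 o3) (G o1 o2) (G o1 o3) (G o2 o3).
rewrite Hval; apply: Nw_ge hk _.
apply/existsP; exists (compL L t); apply/and3P; split.
- apply/injectiveP => i j; rewrite /compL !ffunE => /tinj; exact: (sL_inj HL).
- rewrite eqEcard; apply/andP; split.
    apply/subsetP => x /imsetP [i _ ->]; rewrite /compL ffunE; apply: imset_f; exact: in_setT.
  rewrite !card_imset //; last first.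
    move=> i j; rewrite /compL !ffunE => /tinj; exact: (sL_inj HL).
- apply/forallP => i; apply/forallP => j; rewrite /compL !ffunE.
  have := HG (sL L i) (sL L j); rewrite /G => ->.
  by move: Hiso => /allP /(_ i (ords_all i)) /allP /(_ j (ords_all j)).
Qed.

Lemma sum_inj_le (T : finType) (e : rel T) : symmetric e -> irreflexive e ->
  \sum_(t : {ffun 'I_4 -> T} | injectiveb t) GSt (F:=R) e t
    <= 24%:R * \sum_(S : {set T} | #|S| == 4) Nw e S.
Proof.
move=> se ie.
rewrite (partition_big (fun t : {ffun 'I_4 -> T} => t @: setT) (fun S : {set T} => #|S| == 4)); last first.
  by move=> t /injectiveP ti; rewrite card_imset // cardsT card_ord.
rewrite mulr_sumr; apply: ler_sum => S HS.
apply: (@le_trans _ _ (\sum_(t : {ffun 'I_4 -> T} | injectiveb t && (t @: setT == S)) Nw e S)).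
  by apply: ler_sum => t /andP [ti /eqP <-]; exact: GS_le_Nw.
have -> : \sum_(t : {ffun 'I_4 -> T} | injectiveb t && (t @: setT == S)) Nw e S
   = \sum_(t in [pred t : {ffun 'I_4 -> T} | injectiveb t && (t @: setT == S)]) Nw e S.
  by apply: eq_bigl => t; rewrite inE.
rewrite sumr_const -[Nw e S *+ _]mulr_natl; apply: (ler_wpM2r (Nw_ge0 e S)).
rewrite ler_nat.
have -> : 24%N = (#|S| ^_ #|'I_4|)%N by rewrite (eqP HS) card_ord.
rewrite -card_inj_ffuns_on; apply: subset_leq_card; apply/subsetP => t.
rewrite !inE => /andP [ti /eqP Ht]; rewrite ti andbT.
apply/ffun_onP => x; rewrite -Ht; apply: imset_f; exact: in_setT.
Qed.

Lemma card_cond (T : finType) (P Q : pred {set T}) :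
  (#|[set S : {set T} | P S && Q S]|%:R : R) = \sum_(S : {set T} | P S) (Q S)%:R.
Proof.
rewrite -sum1_card natr_sum big_mkcond [RHS]big_mkcond /=.
by apply: eq_bigr => S _; rewrite inE; case: (P S); case: (Q S).
Qed.

Lemma sumN_le (T : finType) (e : rel T) : in_Pi e ->
  24%:R * \sum_(S : {set T} | #|S| == 4) Nw e S <= 5/16 * (#|T| ^_ 4)%:R.
Proof.
move=> hPi.
case: (ltnP #|T| 4) => hn.
  rewrite big_pred0; last first.
    move=> S; apply/negbTE; apply/eqP => hS.
    by have := max_card (mem S); rewrite -/(#|S|) hS leqNgt hn.
  rewrite mulr0; apply: mulr_ge0; last exact: ler0n.
  by apply: divr_ge0; exact: ler0n.
have hC : ('C(#|T|, 4) > 0)%N by rewrite bin_gt0.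
have key : \sum_(S : {set T} | #|S| == 4) Nw e S = 'C(#|T|, 4)%:R * weighted_density e.
  rewrite wd_nth mulr_sumr (eq_bigr _ (fun S _ => Nw_nth e S)) exchange_big /=.
  apply: eq_bigr => k _.
  rewrite /p_ind card_cond -mulr_sumr cancel_lem //.
  by rewrite pnatr_eq0 -lt0n.
rewrite key -bin_ffact natrM.
apply: pi_arith; first exact: ler0n.
exact: hPi.
Qed.

Lemma comb (F : realFieldType) (x4 a x3 Q Si Sn B : F) :
  5/16 * x4 + 1/16 * Q <= Si + Sn -> Si <= B -> B <= 5/16 * a -> Sn <= x4 - a ->
  x4 <= a + 6 * x3 -> Q <= 66 * x3.
Proof. move=> *; lra. Qed.

From mathcomp Require Import zify.

Lemma ffact_bound (n : nat) : (n ^ 4 <= n ^_ 4 + 6 * n ^ 3)%N.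
Proof.
case: n => [|[|[|m]]] //.
rewrite !ffactnS ffactn0 /=.
nia.
Qed.

Lemma Q_bound (T : finType) (e : rel T) : symmetric e -> irreflexive e -> in_Pi e ->
  Qf (F:=R) e <= 66 * (#|T|%:R) ^+ 3.
Proof.
move=> se ie hPi.
have h1 := sum_G0_ge R se.
rewrite -sum_GS_eq (bigID (fun t : {ffun 'I_4 -> T} => injectiveb t)) /= in h1.
have h2 := sum_inj_le se ie.
have h3 := sumN_le hPi.
set A := [set t : {ffun 'I_4 -> T} | injectiveb t].
have cA : #|A| = (#|T| ^_ 4)%N by rewrite card_inj_ffuns card_ord.
have cAll : #|{ffun 'I_4 -> T}| = (#|T| ^ 4)%N by rewrite card_ffun card_ord.
have cC : #|[predC A]| = (#|T| ^ 4 - #|T| ^_ 4)%N.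
  by rewrite -cAll -cA -(cardC A) addKn.
have hle : (#|T| ^_ 4 <= #|T| ^ 4)%N by rewrite -cAll -cA; exact: max_card.
have h4 : \sum_(t : {ffun 'I_4 -> T} | ~~ injectiveb t) GSt (F:=R) e t
    <= (#|T|%:R) ^+ 4 - (#|T| ^_ 4)%:R.
  apply: (@le_trans _ _ (\sum_(t in [predC A]) 1)).
    rewrite (eq_bigl (fun t => t \in [predC A])); last by move=> t; rewrite !inE.
    by apply: ler_sum => t _; exact: GS_le1.
  by rewrite sumr_const cC natrB // natrX.
apply: (comb h1 h2 h3 h4).
have := ffact_bound #|T|; rewrite -(ler_nat R) natrD natrM !natrX => ->.
done.
Qed.

Lemma final_arith (F : realFieldType) (X E u v n d Q : F) :
  0 < d -> 256 <= d ^+ 8 * n -> 0 <= n -> Q <= 66 * n ^+ 3 ->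
  X ^+ 4 <= u ^+ 2 * v ^+ 2 * Q -> X = 2 * E - u * v ->
  d * n <= u -> d * n <= v ->
  (1/2 - d) * (u * v) <= E /\ E <= (1/2 + d) * (u * v).
Proof.
move=> d0 hd n0 hQ hX hXE hu hv.
have d8 : 0 < d ^+ 8 by apply: exprn_gt0.
have np : 0 < n.
  rewrite lt0r n0 andbT; apply/eqP => nz; move: hd; rewrite nz mulr0; lra.
have dn : 0 < d * n by apply: mulr_gt0.
have u0 : 0 < u by apply: lt_le_trans hu.
have v0 : 0 < v by apply: lt_le_trans hv.
set B := 2 * d * (u * v).
have B0 : 0 <= B by apply: mulr_ge0; [apply: mulr_ge0; lra | apply: mulr_ge0; lra].
have hu2 : (d * n) ^+ 2 <= u ^+ 2 by rewrite !expr2; apply: ler_pM; lra.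
have hv2 : (d * n) ^+ 2 <= v ^+ 2 by rewrite !expr2; apply: ler_pM; lra.
have huv : (d * n) ^+ 4 <= u ^+ 2 * v ^+ 2.
  have -> : (d * n) ^+ 4 = (d * n) ^+ 2 * (d * n) ^+ 2 by rewrite -exprD.
  apply: ler_pM => //; exact: sqr_ge0.
have n3 : 0 <= n ^+ 3 by apply: exprn_ge0.
have k1 : 66 * n ^+ 3 <= 16 * d ^+ 4 * (u ^+ 2 * v ^+ 2).
  have e1 : 16 * d ^+ 4 * (d * n) ^+ 4 = 16 * (d ^+ 8 * n) * n ^+ 3.
    by rewrite exprMn; ring.
  have k2 : 66 * n ^+ 3 <= 16 * (d ^+ 8 * n) * n ^+ 3 by nra.
  have d4 : 0 <= 16 * d ^+ 4 by apply: mulr_ge0; [lra | apply: exprn_ge0; lra].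
  apply: (le_trans k2); rewrite -e1; exact: ler_wpM2l.
have uv2 : 0 <= u ^+ 2 * v ^+ 2 by apply: mulr_ge0; exact: sqr_ge0.
have k3 : X ^+ 4 <= B ^+ 4.
  apply: (le_trans hX).
  have -> : B ^+ 4 = u ^+ 2 * v ^+ 2 * (16 * d ^+ 4 * (u ^+ 2 * v ^+ 2)) by rewrite /B; ring.
  apply: ler_wpM2l => //; exact: le_trans hQ k1.
have k4 : `|X| <= B.
  rewrite -(ler_pXn2r (isT : (0 < 4)%N)) ?nnegrE //.
  by rewrite -normrX ger0_norm // exprn_even_ge0.
have k5 := ler_norm X.
have k6 := ler_norm (- X); rewrite normrN in k6.
rewrite /B in k4.
split; nra.
Qed.

Lemma ebetween_eq (F : realFieldType) (T : finType) (e : rel T) (U V : {set T}) :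
  [disjoint U & V] ->
  \sum_(a in U) \sum_(b in V) Yf (F:=F) e a b
    = 2 * (e_between e U V)%:R - (#|U| * #|V|)%:R.
Proof.
move=> hd.
have hE : ((e_between e U V)%:R : F) = \sum_(a in U) \sum_(b in V) ((e a b)%:R : F).
  rewrite pair_big /e_between -sum1_card natr_sum.
  rewrite big_mkcond [RHS]big_mkcond /=; apply: eq_bigr => p _.
  by rewrite !inE; case: (p.1 \in U); case: (p.2 \in V); case: (e p.1 p.2).
have hY : \sum_(a in U) \sum_(b in V) Yf (F:=F) e a b
    = \sum_(a in U) \sum_(b in V) (2 * (e a b)%:R - 1).
  apply: eq_bigr => a aU; apply: eq_bigr => b bV.
  have ab : (a == b) = false.
    apply/negbTE; apply/eqP => hab; move: bV; rewrite -hab.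
    by rewrite (disjointFr hd aU).
  by rewrite /Yf ab; case: (e a b); rewrite /=; ring.
have inner : forall a, \sum_(b in V) (2 * ((e a b)%:R : F) - 1) = 2 * \sum_(b in V) ((e a b)%:R : F) - (#|V|%:R).
  by move=> a; rewrite sumrB -mulr_sumr sumr_const.
rewrite hY hE (eq_bigr _ (fun a _ => inner a)) sumrB -mulr_sumr sumr_const natrM.
by rewrite -[_ *+ #|U|]mulr_natl.
Qed.

Lemma IZR24 : IZR 24 = 24%:R.
Proof. by rewrite -INRE INR_IZR_INZ. Qed.

Lemma rpow_facts (n : nat) : (1 <= n)%N ->
  0 < Rpower n%:R (- (1 / 24)) /\ 1 <= (Rpower n%:R (- (1 / 24))) ^+ 8 * n%:R.
Proof.
move=> hn.
have npos : Rlt 0 n%:R by apply/RltP; rewrite ltr0n.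
set r := Rpower n%:R (- (1 / 24)).
have r0 : Rlt 0 r by rewrite /r /Rpower; exact: exp_pos.
have hneg : Rle (- (1 / 24)) 0.
  apply/RleP; rewrite RoppE RdivE IZR24 R1E; exact: gen24n.
have r1 : Rle r 1.
  have e0 := Rpower_O _ npos.
  apply: (Rle_trans _ (Rpower n%:R 0)); last by rewrite e0; apply: Rle_refl.
  apply: Rle_Rpower => //.
  by apply/RleP; rewrite ler1n.
have h24 : Rmult (pow r 24) n%:R = 1.
  rewrite -Rpower_pow // /r Rpower_mult.
  have -> : Rmult (- (1 / 24)) (INR 24) = Ropp 1.
    by rewrite INRE IZR24 RmultE RoppE RdivE R1E gen24.
  rewrite Rpower_Ropp Rpower_1 //; apply: Rinv_l.
  by apply: Rgt_not_eq.
split; first by apply/RltP.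
apply: r_arith.
- by apply/RltP.
- by apply/RleP.
- by rewrite -RpowE -RmultE.
- by rewrite ler0n.
Qed.

Lemma delta_facts (F : realFieldType) (c r n : F) : c = 1 + 1 -> 0 < r -> 1 <= r ^+ 8 * n ->
  0 < c * r /\ 256 <= (c * r) ^+ 8 * n.
Proof.
move=> -> r0 h; split; first lra.
have -> : ((1 + 1) * r) ^+ 8 * n = 256 * (r ^+ 8 * n) by rewrite exprMn; ring.
lra.
Qed.

Theorem lemma2p4 :
  exists C : R, 0 < C /\
    forall (n : nat) (e : rel 'I_n), (1 <= n)%N ->
      simple_graph e -> in_Pi e ->
      quasirandom e (C * Rpower n%:R (- (1 / 24))).
Proof.
exists (1 + 1).
split; first by apply: addr_gt0; exact: ltr01.
move=> n e hn [se ie] hPi U V hd hU hV.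
have [r0 r8] := rpow_facts hn.
have [d0 d8] := delta_facts (erefl (1 + 1)) r0 r8.
have hQ := Q_bound se ie hPi; rewrite card_ord in hQ.
have hX : (\sum_(a in U) \sum_(b in V) Yf (F:=R) e a b) ^+ 4
    <= (#|U|%:R) ^+ 2 * (#|V|%:R) ^+ 2 * Qf (F:=R) e.
  have hX0 := @disc4 R _ e (fun x => x \in U) (fun x => x \in V) se.
  have cU : #|(fun x => x \in U)| = #|U| by apply: eq_card.
  have cV : #|(fun x => x \in V)| = #|V| by apply: eq_card.
  rewrite cU cV in hX0.
  exact: hX0.
have hXE := @ebetween_eq R _ e U V hd.
rewrite card_ord in hU hV.
rewrite natrM in hXE *.
have [h1 h2] := final_arith d0 d8 (ler0n _ _) hQ hX hXE hU hV.
by apply/andP; split.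
Qed.
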